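(* For the wound-string system of the context with parameters $(a,C,m)=(\tfrac12,1,-1)$, the fixed points are exactly the four points $(x_1,x_2)\in\{(2,1),(2,-1),(-2,1),(-2,-1)\}$. At each of them, the deviation equations $\ddot\xi_i+2N^i_j\dot\xi_j+2\frac{\partial G^i}{\partial x_j}\xi_j=0$ (coefficients evaluated at $(x,y)=(\bar x,0)$) reduce to $\ddot\xi_1+\tfrac14\xi_1=0$, $\ddot\xi_2+\tfrac14\xi_2=0$; with $\xi(0)=0$, $\dot\xi(0)=(\xi_{10},\xi_{20})\ne0$ the solution is $\xi_i(t)=2\xi_{i0}\sin(t/2)$, so $\frac{\xi_1(t)^2+\xi_2(t)^2}{\xi_{10}^2+\xi_{20}^2}=4\sin^2(t/2)<t^2$ for small $t>0$, and all four fixed points are Jacobi stable (the deviation curvature tensor there equals $-\tfrac14 I_2$).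
   Context: Wound-string system: $\ddot x_1+2G^1=0$, $\ddot x_2+2G^2=0$, $y_i=\dot x_i$, with $G^1=\frac{x_1}{2a^2x_1^2+2m^2x_2^2}\big[a^2(1-y_1^2)-y_2^2-C^2\frac{(a^2x_1^2+m^2x_2^2)^2}{x_1^4x_2^2}\big]$, $G^2=\frac{x_2}{2a^2x_1^2+2m^2x_2^2}\big[m^2(a^2(1-y_1^2)-y_2^2)-a^2C^2\frac{(a^2x_1^2+m^2x_2^2)^2}{x_1^2x_2^4}\big]$. Fixed points: $(x_1,x_2)$ with $x_1x_2\neq0$ and $G^1(x,0)=G^2(x,0)=0$. Einstein summation; $N^i_j=\partial G^i/\partial y_j$, $G^i_{j\ell}=\partial N^i_j/\partial y_\ell$, $P^i_j=-2\frac{\partial G^i}{\partial x_j}-2G^\ell G^i_{j\ell}+y_\ell\frac{\partial N^i_j}{\partial x_\ell}+N^i_\ell N^\ell_j$. Jacobi stable: all eigenvalues of $(P^i_j)$ at $(\bar x,0)$ have strictly negative real parts. *)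

(* Defs.v *)
From Stdlib Require Import Reals Lra.
From Coquelicot Require Import Coquelicot.
Open Scope R_scope.

(* Points x = (x_1, x_2) and y = (y_1, y_2) are represented as functions nat -> R,
   with the paper's index 1 (resp. 2) encoded as 0 (resp. 1). *)

Definition sum2 (f : nat -> R) : R := f 0%nat + f 1%nat.

Definition upd (v : nat -> R) (k : nat) (t : R) : nat -> R :=
  fun l => if Nat.eqb l k then t else v l.

Definition zerov : nat -> R := fun _ => 0.

Definition G1 (a Cc m : R) (x y : nat -> R) : R :=
  x 0%nat / (2 * a ^ 2 * x 0%nat ^ 2 + 2 * m ^ 2 * x 1%nat ^ 2) *
  (a ^ 2 * (1 - y 0%nat ^ 2) - y 1%nat ^ 2
   - Cc ^ 2 * (a ^ 2 * x 0%nat ^ 2 + m ^ 2 * x 1%nat ^ 2) ^ 2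
       / (x 0%nat ^ 4 * x 1%nat ^ 2)).

Definition G2 (a Cc m : R) (x y : nat -> R) : R :=
  x 1%nat / (2 * a ^ 2 * x 0%nat ^ 2 + 2 * m ^ 2 * x 1%nat ^ 2) *
  (m ^ 2 * (a ^ 2 * (1 - y 0%nat ^ 2) - y 1%nat ^ 2)
   - a ^ 2 * Cc ^ 2 * (a ^ 2 * x 0%nat ^ 2 + m ^ 2 * x 1%nat ^ 2) ^ 2
       / (x 0%nat ^ 2 * x 1%nat ^ 4)).

Definition G (a Cc m : R) (i : nat) (x y : nat -> R) : R :=
  match i with 0%nat => G1 a Cc m x y | _ => G2 a Cc m x y end.

Definition dGdx (a Cc m : R) (i j : nat) (x y : nat -> R) : R :=
  Derive (fun t => G a Cc m i (upd x j t) y) (x j).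

Definition Nc (a Cc m : R) (i j : nat) (x y : nat -> R) : R :=
  Derive (fun t => G a Cc m i x (upd y j t)) (y j).

Definition Gc (a Cc m : R) (i j l : nat) (x y : nat -> R) : R :=
  Derive (fun t => Nc a Cc m i j x (upd y l t)) (y l).

Definition dNdx (a Cc m : R) (i j l : nat) (x y : nat -> R) : R :=
  Derive (fun t => Nc a Cc m i j (upd x l t) y) (x l).

Definition P (a Cc m : R) (i j : nat) (x y : nat -> R) : R :=
  - 2 * dGdx a Cc m i j x y
  - 2 * sum2 (fun l => G a Cc m l x y * Gc a Cc m i j l x y)
  + sum2 (fun l => y l * dNdx a Cc m i j l x y)
  + sum2 (fun l => Nc a Cc m i l x y * Nc a Cc m l j x y).

Definition fixed_point (a Cc m : R) (x : nat -> R) : Prop :=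
  x 0%nat * x 1%nat <> 0 /\ G a Cc m 0 x zerov = 0 /\ G a Cc m 1 x zerov = 0.

Definition is_eigenvalue2 (M : nat -> nat -> R) (lam : C) : Prop :=
  exists v : nat -> C, (v 0%nat <> 0%C \/ v 1%nat <> 0%C) /\
    forall i : nat, (i < 2)%nat ->
      Cplus (Cmult (RtoC (M i 0%nat)) (v 0%nat)) (Cmult (RtoC (M i 1%nat)) (v 1%nat))
      = Cmult lam (v i).

Definition jacobi_stable (a Cc m : R) (xb : nat -> R) : Prop :=
  forall lam : C, is_eigenvalue2 (fun i j => P a Cc m i j xb zerov) lam -> Re lam < 0.

(* Main.v *)
Require Import Defs.
From Stdlib Require Import Reals.
From Coquelicot Require Import Coquelicot.
From Stdlib Require Import Lra Lia.
Open Scope R_scope.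

Ltac dcomp H0 H1 := unfold dGdx, Nc, G, G1, G2; cbv beta iota delta [upd Nat.eqb zerov]; rewrite ?H0, ?H1;
  apply is_derive_unique; auto_derive; [ repeat split; lra | field; repeat split; lra ].

Definition four (x : nat -> R) : Prop :=
  ((x 0%nat = 2 /\ x 1%nat = 1) \/ (x 0%nat = 2 /\ x 1%nat = -1) \/
      (x 0%nat = -2 /\ x 1%nat = 1) \/ (x 0%nat = -2 /\ x 1%nat = -1)).

Lemma derivs (x : nat -> R) : four x -> forall i j, (i < 2)%nat -> (j < 2)%nat ->
  Nc (1/2) 1 (-1) i j x zerov = 0 /\
  dGdx (1/2) 1 (-1) i j x zerov = (if Nat.eqb i j then 1/8 else 0).
Proof.
intros Hp i j Hi Hj.
destruct i as [|[|i]]; [| |lia]; destruct j as [|[|j]]; try lia; cbv [Nat.eqb];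
destruct Hp as [[H0 H1]|[[H0 H1]|[[H0 H1]|[H0 H1]]]]; split; dcomp H0 H1.
Qed.

Lemma fixed_iff (x : nat -> R) : fixed_point (1/2) 1 (-1) x <-> four x.
Proof.
unfold fixed_point, four, G, G1, G2, zerov.
set (p := x 0%nat). set (q := x 1%nat).
split.
- intros [Hpq [E1 E2]].
  assert (Hp : p <> 0) by (intro H; apply Hpq; rewrite H; ring).
  assert (Hq : q <> 0) by (intro H; apply Hpq; rewrite H; ring).
  assert (HD : 2 * (1/2)^2 * p^2 + 2 * (-1)^2 * q^2 <> 0).
  { assert (0 < p^2) by (replace (p^2) with (Rsqr p) by (unfold Rsqr; ring); apply Rsqr_pos_lt; auto). nra. }
  assert (p2 : 0 < p^2) by (replace (p^2) with (Rsqr p) by (unfold Rsqr; ring); apply Rsqr_pos_lt; auto).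
  assert (q2 : 0 < q^2) by (replace (q^2) with (Rsqr q) by (unfold Rsqr; ring); apply Rsqr_pos_lt; auto).
  set (S := (1 / 2) ^ 2 * p ^ 2 + (-1) ^ 2 * q ^ 2) in *.
  assert (F1 : S^2 = p^4*q^2/4).
  { assert (K : (p / (2 * (1/2)^2 * p^2 + 2 * (-1)^2 * q^2) *
       ((1 / 2) ^ 2 * (1 - 0 ^ 2) - 0 ^ 2 - 1 ^ 2 * S ^ 2 / (p ^ 4 * q ^ 2)))
       * (2 * (1/2)^2 * p^2 + 2 * (-1)^2 * q^2) * (p^3*q^2) = p^4*q^2/4 - S^2).
    { field; repeat split; auto; lra. }
    rewrite E1 in K. lra. }
  assert (F2 : S^2 = p^2*q^4).
  { assert (K : (q / (2 * (1/2)^2 * p^2 + 2 * (-1)^2 * q^2) *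
       ((-1)^2 * ((1 / 2) ^ 2 * (1 - 0 ^ 2) - 0 ^ 2) - (1/2)^2 * 1 ^ 2 * S ^ 2 / (p ^ 2 * q ^ 4)))
       * (2 * (1/2)^2 * p^2 + 2 * (-1)^2 * q^2) * (4*p^2*q^3) = p^2*q^4 - S^2).
    { field; repeat split; auto; lra. }
    rewrite E2 in K. lra. }
  assert (F3 : p^2 = 4*q^2).
  { assert (p^2*q^2*(p^2 - 4*q^2) = 0) by nra.
    assert (0 < p^2*q^2) by (apply Rmult_lt_0_compat; auto).
    nra. }
  assert (SS : S = 2*q^2) by (unfold S; lra).
  rewrite SS in F2. rewrite F3 in F2.
  assert (F4 : q^2 = 1).
  { assert (q^4*(q^2-1) = 0) by nra. assert (0 < q^4) by (replace (q^4) with (q^2*q^2) by ring; apply Rmult_lt_0_compat; auto). nra. }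
  assert (Q : q = 1 \/ q = -1).
  { assert ((q-1)*(q+1) = 0) by nra. apply Rmult_integral in H. lra. }
  assert (P : p = 2 \/ p = -2).
  { assert ((p-2)*(p+2) = 0) by nra. apply Rmult_integral in H. lra. }
  destruct P as [-> | ->]; destruct Q as [-> | ->]; tauto.
- intros H. destruct H as [[-> ->]|[[-> ->]|[[-> ->]|[-> ->]]]];
  (split; [lra | split; field; lra]).
Qed.
Lemma ode_unique (f df : R -> R) (c : R) :
  (forall t, is_derive f t (df t)) -> (forall t, ex_derive df t) ->
  (forall t, Derive df t + 1/4 * f t = 0) -> f 0 = 0 -> df 0 = c ->
  forall t, f t = 2 * c * sin (t/2).
Proof.
intros Hf Hdf Heq H0 H1.
set (E := fun t => (f t - 2*c*sin(t/2))^2/4 + (df t - c*cos(t/2))^2).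
assert (HE : forall t, is_derive E t 0).
{ intro t. unfold E.
  auto_derive.
  - split; [exists (df t); apply Hf | split; [apply Hdf | exact I]].
  - replace (Derive (fun x => f x) t) with (df t) by (symmetry; apply is_derive_unique; apply Hf).
    change (Derive (fun x => df x) t) with (Derive df t).
    replace (Derive df t) with (-(1/4) * f t) by (specialize (Heq t); simpl in *; lra).
    field. }
assert (Ec : forall t, E t = E 0).
{ intro t. destruct (Rtotal_order t 0) as [Hl|[He|Hg]].
  - apply (eq_is_derive E t 0); [intros; apply HE | exact Hl].
  - rewrite He; reflexivity.
  - symmetry. apply (eq_is_derive E 0 t); [intros; apply HE | exact Hg]. }
intro t. specialize (Ec t). unfold E in Ec. rewrite H0, H1 in Ec.
replace (0/2) with 0 in Ec by field. rewrite sin_0, cos_0 in Ec.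
assert (Z : (0 - 2 * c * 0) ^ 2 / 4 + (c - c * 1) ^ 2 = 0) by field. rewrite Z in Ec.
set (A := f t - 2 * c * sin (t / 2)) in *. set (B := df t - c * cos (t / 2)) in *.
assert (HA := pow2_ge_0 A). assert (HB := pow2_ge_0 B).
assert (H : A ^ 2 = 0) by lra.
assert (A = 0) by nra. unfold A in *. lra.
Qed.

Lemma Pval (xb : nat -> R) : four xb -> forall i j, (i < 2)%nat -> (j < 2)%nat ->
  P (1/2) 1 (-1) i j xb zerov = (if Nat.eqb i j then - (1 / 4) else 0).
Proof.
intros Hf i j Hi Hj.
assert (Hfp := proj2 (fixed_iff xb) Hf). destruct Hfp as [_ [G0 G1']].
destruct (derivs xb Hf 0 0 ltac:(lia) ltac:(lia)) as [N00 D00].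
destruct (derivs xb Hf 0 1 ltac:(lia) ltac:(lia)) as [N01 D01].
destruct (derivs xb Hf 1 0 ltac:(lia) ltac:(lia)) as [N10 D10].
destruct (derivs xb Hf 1 1 ltac:(lia) ltac:(lia)) as [N11 D11].
simpl in D00, D01, D10, D11.
unfold P, sum2. cbv beta. rewrite G0, G1'.
destruct i as [|[|i]]; [| |lia]; destruct j as [|[|j]]; try lia; simpl Nat.eqb;
rewrite ?N00, ?N01, ?N10, ?N11, ?D00, ?D01, ?D10, ?D11; change (zerov 0%nat) with 0; change (zerov 1%nat) with 0; lra.
Qed.

Lemma sq_pos (x : R) : x <> 0 -> 0 < x^2.
Proof. intro H. replace (x^2) with (Rsqr x) by (unfold Rsqr; ring). apply Rsqr_pos_lt; auto. Qed.

Lemma eig (xb : nat -> R) : four xb -> jacobi_stable (1/2) 1 (-1) xb.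
Proof.
intros Hf lam [v [Hv Heq]].
assert (E0 := Heq 0%nat ltac:(lia)). assert (E1 := Heq 1%nat ltac:(lia)).
rewrite !Pval in E0, E1 by (auto; lia). simpl Nat.eqb in E0, E1.
destruct lam as [lr li]. destruct (v 0%nat) as [a b] eqn:Ha. destruct (v 1%nat) as [c d] eqn:Hb.
unfold Cplus, Cmult, RtoC in E0, E1. simpl in E0, E1.
injection E0 as E0a E0b. injection E1 as E1a E1b.
simpl.
assert (HN : a^2 + b^2 + c^2 + d^2 > 0).
{ destruct Hv as [Hv|Hv].
  - assert (a <> 0 \/ b <> 0).
    { destruct (Req_dec a 0); destruct (Req_dec b 0); auto. subst. exfalso; apply Hv; reflexivity. }
    destruct H as [H|H]; apply sq_pos in H; nra.
  - assert (c <> 0 \/ d <> 0).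
    { destruct (Req_dec c 0); destruct (Req_dec d 0); auto. subst. exfalso; apply Hv; reflexivity. }
    destruct H as [H|H]; apply sq_pos in H; nra. }
assert (Ka : (lr+1/4)*a = li*b) by lra. assert (Kb : (lr+1/4)*b = -(li*a)) by lra.
assert (Kc : (lr+1/4)*c = li*d) by lra. assert (Kd : (lr+1/4)*d = -(li*c)) by lra.
assert (Z : (lr + 1/4) * (a^2+b^2+c^2+d^2) = 0).
{ replace ((lr + 1/4) * (a^2+b^2+c^2+d^2)) with
   (((lr+1/4)*a)*a + ((lr+1/4)*b)*b + ((lr+1/4)*c)*c + ((lr+1/4)*d)*d) by ring.
  rewrite Ka, Kb, Kc, Kd. ring. }
apply Rmult_integral in Z. destruct Z; lra.
Qed.
Theorem mainTheorem5 :
  let a := 1 / 2 in let Cc := 1 in let m := -1 in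
  (* the fixed points are exactly the four points *)
  (forall x : nat -> R,
     fixed_point a Cc m x <->
     ((x 0%nat = 2 /\ x 1%nat = 1) \/ (x 0%nat = 2 /\ x 1%nat = -1) \/
      (x 0%nat = -2 /\ x 1%nat = 1) \/ (x 0%nat = -2 /\ x 1%nat = -1))) /\
  (forall xb : nat -> R, fixed_point a Cc m xb ->
     (* deviation equations reduce to xi_i'' + 1/4 xi_i = 0 *)
     (forall i j : nat, (i < 2)%nat -> (j < 2)%nat ->
        Nc a Cc m i j xb zerov = 0 /\
        2 * dGdx a Cc m i j xb zerov = (if Nat.eqb i j then 1 / 4 else 0)) /\
     (* the solution with xi(0) = 0, xi'(0) = xi0 <> 0 *)
     (forall (xi0 : nat -> R), (xi0 0%nat <> 0 \/ xi0 1%nat <> 0) ->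
      forall (xi dxi : nat -> R -> R),
        (forall i t, (i < 2)%nat -> is_derive (xi i) t (dxi i t)) ->
        (forall i t, (i < 2)%nat -> ex_derive (dxi i) t) ->
        (forall i t, (i < 2)%nat ->
           Derive (dxi i) t
           + 2 * sum2 (fun j => Nc a Cc m i j xb zerov * dxi j t)
           + 2 * sum2 (fun j => dGdx a Cc m i j xb zerov * xi j t) = 0) ->
        (forall i, (i < 2)%nat -> xi i 0 = 0 /\ dxi i 0 = xi0 i) ->
        forall t : R,
          (forall i, (i < 2)%nat -> xi i t = 2 * xi0 i * sin (t / 2)) /\
          (xi 0%nat t ^ 2 + xi 1%nat t ^ 2) / (xi0 0%nat ^ 2 + xi0 1%nat ^ 2)
            = 4 * sin (t / 2) ^ 2) /\
     (* the deviation curvature tensor equals -1/4 I_2 *)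
     (forall i j : nat, (i < 2)%nat -> (j < 2)%nat ->
        P a Cc m i j xb zerov = (if Nat.eqb i j then - (1 / 4) else 0)) /\
     jacobi_stable a Cc m xb) /\
  (* 4 sin^2(t/2) < t^2 for small t > 0 *)
  (exists delta : R, 0 < delta /\
     forall t : R, 0 < t < delta -> 4 * sin (t / 2) ^ 2 < t ^ 2).
Proof.
cbv zeta.
split; [intro x; exact (fixed_iff x) |].
split.
- intros xb Hfp. assert (Hf : four xb) by (apply fixed_iff; auto).
  split.
  { intros i j Hi Hj. destruct (derivs xb Hf i j Hi Hj) as [N D]. split; auto.
    rewrite D. destruct (Nat.eqb i j); lra. }
  split.
  { intros xi0 Hne xi dxi Hd Hdd Heq Hinit.
    assert (Hsol : forall i, (i < 2)%nat -> forall t, xi i t = 2 * xi0 i * sin (t / 2)).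
    { intros i Hi. apply ode_unique with (df := dxi i);
        [intro; apply Hd; auto | intro; apply Hdd; auto | | apply (proj1 (Hinit i Hi)) | apply (proj2 (Hinit i Hi))].
      intro s. specialize (Heq i s Hi). unfold sum2 in Heq.
      destruct (derivs xb Hf i 0 Hi ltac:(lia)) as [Na Da].
      destruct (derivs xb Hf i 1 Hi ltac:(lia)) as [Nb Db].
      rewrite Na, Nb, Da, Db in Heq.
      destruct i as [|[|i]]; [| |lia]; simpl Nat.eqb in Heq; lra. }
    intro t. split.
    - intros i Hi; apply Hsol; auto.
    - rewrite !Hsol by lia.
      assert (0 < xi0 0%nat ^ 2 + xi0 1%nat ^ 2).
      { assert (A := pow2_ge_0 (xi0 0%nat)). assert (B := pow2_ge_0 (xi0 1%nat)).
        destruct Hne as [H|H]; apply sq_pos in H; lra. }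
      field. lra. }
  split.
  { exact (Pval xb Hf). }
  exact (eig xb Hf).
- exists 1. split; [lra|]. intros t [Ht1 Ht2].
  assert (HP := PI2_1).
  assert (S1 : 0 < sin (t/2)) by (apply sin_gt_0; lra).
  assert (S2 : sin (t/2) < t/2) by (apply sin_lt_x; lra).
  nra.
Qed.
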